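(* Let $E$ be a $KB$-space, let $\mathfrak{B}$ be a Boolean subalgebra of $\mathfrak{B}(E)$, let $\xi$ be a forward filtration in $\mathfrak{B}$ and let $T\colon E\to E$ be a $\mathfrak{B}$-Volterra operator. Let $B'$ be the band generated by $\{(\mathbf{s}^k(x))_{k=0}^\infty: x\in\mathcal{M}_b(\xi)\}$ in the Banach lattice $\big(\bigoplus_{k=0}^\infty\mathcal{M}_b(L^k(\xi))\big)_{\ell_\infty}$. For each $l\ge1$, the operator $(\hat{T}_\xi^l)^{!}((y_k)_{k=0}^\infty)=(\mathbf{s}^k\hat{T}_\xi^l y_0)_{k=0}^\infty$ extends to a norm continuous operator $(\hat{T}_\xi^l)^{!}\colon B'\to\big(\bigoplus_{k=0}^\infty\mathcal{M}_b(L^k(\xi))\big)_{\ell_\infty}$ such that $(\hat{T}_\xi^l)^{!}=((\hat{T}_\xi^1)^{!})^l$; i.e. the correspondence $!$ is a discrete semigroup morphism between the semigroups generated by $\hat{T}_\xi$ and $(\hat{T}_\xi^1)^{!}$.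
   Context: A $KB$-space is a Banach lattice in which every increasing norm bounded sequence is norm convergent. $\mathfrak{B}(E)$ is the Boolean algebra of all order projections on $E$ (zero $\mathbf 0$, unit $\mathbf 1=I_E$, $\pi\le\rho$ iff $\pi\rho=\pi$). A positive operator $T$ is $\mathfrak{B}$-Volterra if for all $\pi\in\mathfrak{B}$, $x,y\in E$, $\pi x=\pi y$ implies $\pi Tx=\pi Ty$. A forward filtration in $\mathfrak{B}$ is a map $\xi\colon\{0,1,\dots,\infty\}\to\mathfrak{B}$ with $\xi_n\le\xi_{n+1}$, $\xi_0=\mathbf 0$, $\xi_\infty=\mathbf 1$; $L(\xi)_0=\xi_0$, $L(\xi)_n=\xi_{n+1}$ ($n\ge1$), $L^0(\xi)=\xi$. $\mathcal{M}_b(\xi)$ is the Banach lattice of sequences $(x_n)_{n\ge1}$ in $E$ with $\xi_nx_m=x_n$ for $m\ge n\ge1$ and $\sup_n\|x_n\|<\infty$ (coordinatewise order, sup norm). $\hat{T}_\xi((x_n))=(\xi_nTx_n)$; $\mathbf{s}((x_n)_{n\ge1})=(x_{n+1})_{n\ge1}$ maps $\mathcal{M}_b(L^k(\xi))$ to $\mathcal{M}_b(L^{k+1}(\xi))$, $\mathbf{s}^k$ is the $k$-fold composite and $\mathbf{s}^0$ the identity. $(\bigoplus_k X_k)_{\ell_\infty}$ is the space of norm bounded sequences with pointwise order and sup norm. *)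

(* Defs.v *)
From HB Require Import structures.
From mathcomp Require Import all_boot all_order all_algebra.
From mathcomp Require Import all_classical all_reals all_analysis.
Set Implicit Arguments. Unset Strict Implicit. Unset Printing Implicit Defensive.
Import Order.TTheory GRing.Theory Num.Theory.
Import numFieldNormedType.Exports.
Local Open Scope ring_scope.
Local Open Scope classical_set_scope.

Record BanachLattice (R : realType) (E : completeNormedModType R) := {
  le : E -> E -> Prop;
  join : E -> E -> E;
  le_refl : forall x, le x x;
  le_trans : forall x y z, le x y -> le y z -> le x z;
  le_anti : forall x y, le x y -> le y x -> x = y;
  le_add : forall x y z, le x y -> le (x + z) (y + z);
  le_scale : forall (a : R) x y, 0 <= a -> le x y -> le (a *: x) (a *: y);
  join_ubl : forall x y, le x (join x y);
  join_ubr : forall x y, le y (join x y);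
  join_least : forall x y z, le x z -> le y z -> le (join x y) z;
  norm_lattice : forall x y, le (join x (- x)) (join y (- y)) -> `|x| <= `|y|
}.

Section BL.
Variables (R : realType) (E : completeNormedModType R) (BL : BanachLattice E).

Definition absE (x : E) : E := join BL x (- x).

Definition KB_space : Prop :=
  forall u : nat -> E, (forall n, le BL (u n) (u n.+1)) ->
    (exists M : R, forall n, `|u n| <= M) -> cvg (u @ \oo).

Definition is_linear (f : E -> E) : Prop :=
  (forall x y, f (x + y) = f x + f y) /\ (forall (a : R) x, f (a *: x) = a *: f x).

Definition positive_op (T : E -> E) : Prop :=
  is_linear T /\ forall x, le BL 0 x -> le BL 0 (T x).

(* order projection: a linear projection P with 0 <= P <= I
   (Aliprantis--Burkinshaw: equivalent to being a band projection) *)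
Definition order_projection (P : E -> E) : Prop :=
  is_linear P /\ (forall x, P (P x) = P x) /\
  (forall x, le BL 0 x -> le BL 0 (P x) /\ le BL (P x) x).

Definition proj_zero : E -> E := fun _ => 0.
Definition proj_one : E -> E := id.
Definition proj_le (pi rho : E -> E) : Prop := (pi \o rho) = pi.

Definition boolean_subalgebra (B : set (E -> E)) : Prop :=
  (forall pi, B pi -> order_projection pi) /\
  B proj_zero /\ B proj_one /\
  (forall pi rho, B pi -> B rho -> B (pi \o rho)) /\
  (forall pi rho, B pi -> B rho -> B (fun x => pi x + rho x - pi (rho x))) /\
  (forall pi, B pi -> B (fun x => x - pi x)).

(* forward filtration: xi_n for n : nat, xi_infinity = 1 implicitly *)
Definition forward_filtration (B : set (E -> E)) (xi : nat -> E -> E) : Prop :=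
  (forall n, B (xi n)) /\ xi 0%N = proj_zero /\
  (forall n, proj_le (xi n) (xi n.+1)).

Definition volterra (B : set (E -> E)) (T : E -> E) : Prop :=
  forall pi, B pi -> forall x y, pi x = pi y -> pi (T x) = pi (T y).

(* A sequence (x_n)_{n>=1} is encoded as x : nat -> E with x i = x_{i+1}.
   (L^k xi)_n = xi_{n+k} for n >= 1. *)
Definition in_Mb (xi : nat -> E -> E) (k : nat) (x : nat -> E) : Prop :=
  (forall i j, (i <= j)%N -> xi (i + 1 + k)%N (x j) = x i) /\
  (exists M : R, forall i, `|x i| <= M).

(* Elements of (bigoplus_k M_b(L^k xi))_{l_infty}: y k = k-th component. *)
Definition Wt := nat -> nat -> E.

Definition W_bounded_by (y : Wt) (M : R) : Prop := forall k i, `|y k i| <= M.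

Definition in_W (xi : nat -> E -> E) (y : Wt) : Prop :=
  (forall k, in_Mb xi k (y k)) /\ exists M, W_bounded_by y M.

Definition W_le (y z : Wt) : Prop := forall k i, le BL (y k i) (z k i).
Definition W_abs (y : Wt) : Wt := fun k i => absE (y k i).
Definition W_add (y z : Wt) : Wt := fun k i => y k i + z k i.
Definition W_scale (a : R) (y : Wt) : Wt := fun k i => a *: y k i.
Definition W_zero : Wt := fun _ _ => 0.

Definition W_is_sup (xi : nat -> E -> E) (A : set Wt) (z : Wt) : Prop :=
  in_W xi z /\ (forall y, A y -> W_le y z) /\
  (forall u, in_W xi u -> (forall y, A y -> W_le y u) -> W_le z u).

Definition W_band (xi : nat -> E -> E) (S : set Wt) : Prop :=
  (forall y, S y -> in_W xi y) /\
  S W_zero /\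
  (forall y z, S y -> S z -> S (W_add y z)) /\
  (forall a y, S y -> S (W_scale a y)) /\
  (forall y z, S y -> in_W xi z -> W_le (W_abs z) (W_abs y) -> S z) /\
  (forall A z, A `<=` S -> W_is_sup xi A z -> S z).

Definition shift_k (k : nat) (x : nat -> E) : nat -> E := fun i => x (i + k)%N.

Definition gen_set (xi : nat -> E -> E) : set Wt :=
  [set y | exists x, in_Mb xi 0 x /\ y = fun k => shift_k k x].

Definition band_generated (xi : nat -> E -> E) (D : set Wt) : set Wt :=
  [set y | forall S, W_band xi S -> D `<=` S -> S y].

Definition That (xi : nat -> E -> E) (T : E -> E) (x : nat -> E) : nat -> E :=
  fun i => xi (i + 1)%N (T (x i)).

Definition bang (xi : nat -> E -> E) (T : E -> E) (l : nat) (y : Wt) : Wt :=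
  fun k => shift_k k (iter l (That xi T) (y 0%N)).

End BL.

(* Main.v *)
Require Import Defs.
From HB Require Import structures.
From mathcomp Require Import all_boot all_order all_algebra.
From mathcomp Require Import all_classical all_reals all_analysis.
Import Order.TTheory GRing.Theory Num.Theory.
Import numFieldNormedType.Exports.
Local Open Scope ring_scope.
Local Open Scope classical_set_scope.
From mathcomp Require Import ring lra.

Set Implicit Arguments. Unset Strict Implicit.
Section Lat.
Variables (R : realType) (E : completeNormedModType R) (BL : BanachLattice E).
Local Notation le := (Defs.le BL).
Local Notation jn := (Defs.join BL).
Local Notation ab := (absE BL).
Local Notation leT := (@Defs.le_trans _ _ BL).
Local Notation leA := (@Defs.le_add _ _ BL _ _).
Local Notation leS := (@Defs.le_scale _ _ BL).
Local Notation leN := (@Defs.le_anti _ _ BL).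
Local Notation leR := (Defs.le_refl BL).
Local Notation jL := (@Defs.join_least _ _ BL).
Local Notation jl := (Defs.join_ubl BL).
Local Notation jr := (Defs.join_ubr BL).
Local Notation nl := (@Defs.norm_lattice _ _ BL).

Lemma leB0 x y : le x y -> le 0 (y - x).
Proof. by move=> h; have := leA (- x) h; rewrite subrr. Qed.
Lemma le0B x y : le 0 (y - x) -> le x y.
Proof. by move=> h; have := leA x h; rewrite add0r subrK. Qed.
Lemma leN0 x : le 0 x -> le (- x) 0.
Proof. by move=> h; have := leA (- x) h; rewrite add0r subrr. Qed.

Lemma abs_pos x : le 0 x -> ab x = x.
Proof.
move=> h; apply: leN; last exact: jl.
apply: jL; first exact: leR.
exact: leT (leN0 h) h.
Qed.

Lemma abs_ge0 x : le 0 (ab x).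
Proof.
have h1 : le x (ab x) := jl x (- x).
have h2 : le (- x) (ab x) := jr x (- x).
have h3 := leA (- x) h1.
have h4 := leA (ab x) h2.
rewrite subrr in h3.
have h5 := leT h3 (eq_ind _ (fun z => le z _) h4 _ (addrC _ _)).
have hq : (0:R) <= 2^-1 by rewrite invr_ge0 ler0n.
have h6 := leS hq h5.
have e : (2^-1 + 2^-1 : R) = 1 by field.
by move: h6; rewrite scaler0 scalerDr -scalerDl e scale1r.
Qed.

Lemma abs_abs x : ab (ab x) = ab x.
Proof. exact: abs_pos (abs_ge0 x). Qed.

Lemma norm_mono a b : le 0 a -> le a b -> `|a| <= `|b|.
Proof.
move=> ha hab; apply: nl.
rewrite -/(ab a) -/(ab b) abs_pos // abs_pos //; exact: leT ha hab.
Qed.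

Lemma norm_abs x : `|ab x| = `|x|.
Proof.
apply/eqP; rewrite eq_le; apply/andP; split; apply: nl;
rewrite -/(ab _) -/(ab _) abs_abs; exact: leR.
Qed.

Lemma lin0 (f : E -> E) : is_linear f -> f 0 = 0.
Proof. rewrite /is_linear => -[_ hs]; have := hs 0 0; by rewrite !scale0r. Qed.
Lemma linN (f : E -> E) x : is_linear f -> f (- x) = - f x.
Proof. rewrite /is_linear => -[_ hs]; have := hs (-1) x; by rewrite !scaleN1r. Qed.
Lemma linB (f : E -> E) x y : is_linear f -> f (x - y) = f x - f y.
Proof. by move=> hl; rewrite (proj1 hl) linN. Qed.

Lemma pos_abs (f : E -> E) v : is_linear f -> (forall x, le 0 x -> le 0 (f x)) ->
  le (ab (f v)) (f (ab v)).
Proof.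
move=> hl hp; apply: jL.
  apply: le0B; rewrite -linB //; apply: hp; apply: leB0; exact: jl.
apply: le0B; rewrite opprK -(proj1 hl); apply: hp.
have := leB0 (jr v (- v)); by rewrite opprK.
Qed.

Lemma pos_norm (f : E -> E) v : is_linear f -> (forall x, le 0 x -> le 0 (f x)) ->
  `|f v| <= `|f (ab v)|.
Proof.
move=> hl hp; apply: nl; rewrite -/(ab _) -/(ab _).
rewrite (abs_pos (hp _ (abs_ge0 v))); exact: pos_abs.
Qed.

Lemma proj_norm (P : E -> E) v : order_projection BL P -> `|P v| <= `|v|.
Proof.
rewrite /order_projection => -[hl [_ hp]].
have hp0 : forall x, le 0 x -> le 0 (P x) by move=> x /hp [].
rewrite -norm_abs; apply: nl; rewrite -/(ab _) -/(ab _) abs_abs.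
apply: leT (pos_abs v hl hp0) _; exact: (proj2 (hp _ (abs_ge0 v))).
Qed.


Lemma closed_ge (u : nat -> E) y z m : (forall n, (m <= n)%N -> le z (u n)) ->
  u @ \oo --> y -> le z y.
Proof.
move=> hu /cvgrPdist_lt hc.
set d := jn (z - y) 0.
have hd0 : le 0 d := jr _ _.
have hb : forall n, (m <= n)%N -> `|d| <= `|y - u n|.
  move=> n hn; rewrite (distrC y) -(norm_abs (u n - y)); apply: (norm_mono hd0).
  apply: jL; last exact: abs_ge0.
  apply: leT (jl _ _); exact: leA (- y) (hu n hn).
have hd : d = 0.
  case: (eqVneq d 0) => // hne.
  have hpos : 0 < `|d| by rewrite normr_gt0.
  have [N _ HN] := hc _ hpos.
  have h := HN (maxn N m) (leq_maxl N m).
  have := le_lt_trans (hb _ (leq_maxr N m)) h; by rewrite ltxx.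
have h1 : le (z - y) 0 by rewrite -hd; exact: jl.
by have := leA y h1; rewrite subrK add0r.
Qed.

Lemma pos_bounded (T : E -> E) : KB_space BL -> positive_op BL T ->
  exists C, forall v, `|T v| <= C * `|v|.
Proof.
move=> hKB [hl hp].
suff [C hC] : exists C, forall a, le 0 a -> `|T a| <= C * `|a|.
  exists C => v; apply: le_trans (pos_norm v hl hp) _.
  by rewrite -(norm_abs v); apply: hC; exact: abs_ge0.
case: (pselect (exists C, forall a, le 0 a -> `|T a| <= C * `|a|)) => [//|hno].
exfalso.
have hex : forall n : nat, exists a, le 0 a /\ n%:R * 2 ^+ n * `|a| < `|T a|.
  move=> n; apply: contrapT => hn; apply: hno; exists (n%:R * 2 ^+ n) => a ha.
  rewrite leNgt; apply/negP => hlt; apply: hn; by exists a.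
case: (choice hex) => a ha.
have anz : forall n, 0 < `|a n|.
  move=> n; rewrite normr_gt0; apply/eqP => h0; have := (ha n).2.
  by rewrite h0 lin0 // normr0 mulr0 ltxx.
pose q n : R := (2 ^+ n)^-1.
have qpos : forall n, 0 < q n by move=> n; rewrite invr_gt0 exprn_gt0.
have qS : forall n, q n.+1 * 2 = q n.
  move=> n; rewrite /q exprS invfM mulrAC mulVf ?mul1r //.
pose b n := (q n / `|a n|) *: a n.
have cpos : forall n, 0 < q n / `|a n| by move=> n; rewrite divr_gt0.
have hb0 : forall n, le 0 (b n).
  move=> n; have := leS (ltW (cpos n)) (ha n).1; by rewrite scaler0.
have hbn : forall n, `|b n| = q n.
  move=> n; rewrite normrZ gtr0_norm // divfK //; exact: lt0r_neq0.
have hTb : forall n, n%:R < `|T (b n)|.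
  move=> n; rewrite (proj2 hl) normrZ gtr0_norm //.
  have e : q n / `|a n| * (n%:R * 2 ^+ n * `|a n|) = n%:R.
    rewrite /q; field; apply/andP; split; first exact: lt0r_neq0.
    by rewrite expf_neq0.
  by rewrite -e ltr_pM2l //; exact: (ha n).2.
pose s N := \sum_(i < N) b i.
have sS : forall n, s n.+1 = s n + b n by move=> n; rewrite /s big_ord_recr.
have s0 : s 0%N = 0 by rewrite /s big_ord0.
have hs_incr : forall n, le (s n) (s n.+1).
  move=> n; rewrite sS; have := leA (s n) (hb0 n); by rewrite add0r addrC.
have hs_norm : forall n, `|s n| <= 2 - 2 * q n.
  elim=> [|n ih]; first by rewrite s0 normr0 /q expr0 invr1 mulr1 subrr.
  rewrite sS; apply: le_trans (ler_normD _ _) _; rewrite hbn.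
  have := qS n; have := qpos n.+1; lra.
have hcv : cvg (s @ \oo).
  apply: hKB => //; exists 2 => n.
  apply: le_trans (hs_norm n) _; have := qpos n; lra.
have hs_mono : forall m k, le (s m) (s (m + k)%N).
  move=> m; elim=> [|k ih]; first by rewrite addn0; exact: leR.
  rewrite addnS; exact: leT ih (hs_incr _).
set x := lim (s @ \oo) in hcv.
have hxb : forall m, le (b m) x.
  move=> m; apply: (@closed_ge s x (b m) m.+1) hcv => n hn.
  have h1 : le (b m) (s m.+1).
    rewrite sS; have := leA (b m) (eq_ind _ (fun w => le w (s m)) (hs_mono 0%N m) _ s0).
    by rewrite add0r.
  rewrite -(subnKC hn); exact: leT h1 (hs_mono _ _).
have hTx : forall m, `|T (b m)| <= `|T x|.
  move=> m; apply: norm_mono; first exact: hp.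
  apply: le0B; rewrite -linB //; apply: hp; exact: leB0.
have := lt_le_trans (hTb (Num.truncn `|T x|).+1) (hTx _).
have := truncnS_gt `|T x|; move=> h1 h2.
have := lt_trans h1 h2; by rewrite ltxx.
Qed.

End Lat.

Section Main.
Variables (R : realType) (E : completeNormedModType R) (BL : BanachLattice E).
Variables (B : set (E -> E)) (xi : nat -> E -> E) (T : E -> E) (C : R).
Hypothesis hBA : boolean_subalgebra BL B.
Hypothesis hF : forward_filtration B xi.
Hypothesis hT : positive_op BL T.
Hypothesis hV : volterra B T.
Hypothesis hC : forall v, `|T v| <= C * `|v|.
Hypothesis hC0 : 0 <= C.

Lemma xi_op n : order_projection BL (xi n).
Proof. exact: hBA.1 _ (hF.1 n). Qed.
Lemma xi_lin n : is_linear (xi n).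
Proof. exact: (xi_op n).1. Qed.

Lemma xi_chain m k v : xi m (xi (m + k) v) = xi m v.
Proof.
elim: k v => [|k ih] v; first by rewrite addn0; exact: (xi_op m).2.1.
have e : xi (m + k) (xi (m + k).+1 v) = xi (m + k) v.
  have := hF.2.2 (m + k); rewrite /proj_le => h; exact: (congr1 (fun f => f v) h).
by rewrite addnS -(ih (xi (m + k).+1 v)) e ih.
Qed.

Lemma xi_le m n v : (m <= n)%N -> xi m (xi n v) = xi m v.
Proof. by move=> h; rewrite -(subnKC h) xi_chain. Qed.

Lemma That_Mb x : in_Mb xi 0 x -> in_Mb xi 0 (That xi T x).
Proof.
case=> hx [M hM]; split.
  move=> i j hij; rewrite /That !addn0 xi_le ?leq_add2r //.
  apply: (hV (hF.1 (i + 1)%N)).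
  by have := hx i j hij; have := hx i i (leqnn i); rewrite !addn0 => -> ->.
exists (C * M) => i; rewrite /That.
apply: le_trans (proj_norm _ (xi_op _)) _; apply: le_trans (hC _) _.
exact: ler_wpM2l.
Qed.

Lemma That_bound x M : (forall i, `|x i| <= M) -> forall i, `|That xi T x i| <= C * M.
Proof.
move=> hM i; rewrite /That.
apply: le_trans (proj_norm _ (xi_op _)) _; apply: le_trans (hC _) _.
exact: ler_wpM2l.
Qed.

Lemma iter_bound l x M : (forall i, `|x i| <= M) ->
  forall i, `|iter l (That xi T) x i| <= C ^+ l * M.
Proof.
move=> hM; elim: l => [|l ih] i /=; first by rewrite expr0 mul1r.
by rewrite exprS -mulrA; apply: That_bound.
Qed.

Lemma iter_Mb l x : in_Mb xi 0 x -> in_Mb xi 0 (iter l (That xi T) x).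
Proof. by move=> h; elim: l => [|l ih] //=; apply: That_Mb. Qed.

Lemma iter_lin l x x' (a : R) :
  iter l (That xi T) (fun i => x i + a *: x' i) =
  (fun i => iter l (That xi T) x i + a *: iter l (That xi T) x' i).
Proof.
elim: l => [|l ih] //=; rewrite ih; apply: funext => i; rewrite /That.
by rewrite (proj1 hT.1) (proj2 hT.1) (proj1 (xi_lin _)) (proj2 (xi_lin _)).
Qed.

Lemma gen_inW x : in_Mb xi 0 x -> in_W xi (fun k => shift_k k x).
Proof.
case=> hx [M hM]; split; last by exists M => k i; exact: hM.
move=> k; split; last by exists M => i; exact: hM.
move=> i j hij; rewrite /shift_k.
have e : (i + 1 + k = i + k + 1 + 0)%N by rewrite addn0 addnAC.
by rewrite e hx // leq_add2r.
Qed.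

Lemma inW_band : W_band BL xi (in_W xi).
Proof.
split; first by [].
split.
  split; last by exists 0 => k i; rewrite normr0.
  move=> k; split; last by exists 0 => i; rewrite normr0.
  by move=> i j _; rewrite /W_zero lin0 //; exact: xi_lin.
split.
  move=> y z [hy [My hMy]] [hz [Mz hMz]]; split; last first.
    by exists (My + Mz) => k i; apply: le_trans (ler_normD _ _) _; apply: lerD.
  move=> k; split; last by exists (My + Mz) => i; apply: le_trans (ler_normD _ _) _; apply: lerD.
  move=> i j hij; rewrite /W_add (proj1 (xi_lin _)).
  by rewrite (proj1 (hy k)) // (proj1 (hz k)).
split.
  move=> a y [hy [My hMy]]; split; last first.
    by exists (`|a| * My) => k i; rewrite normrZ; apply: ler_wpM2l.
  move=> k; split; last by exists (`|a| * My) => i; rewrite normrZ; apply: ler_wpM2l.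
  by move=> i j hij; rewrite /W_scale (proj2 (xi_lin _)) (proj1 (hy k)).
split; first by move=> y z _ h _.
by move=> A z _ [].
Qed.

Lemma B'_inW y : band_generated BL xi (gen_set xi) y -> in_W xi y.
Proof.
move=> h; apply: h; first exact: inW_band.
by move=> w [x [hx ->]]; exact: gen_inW.
Qed.

End Main.

Theorem theorem4p9 (R : realType) (E : completeNormedModType R)
  (BL : BanachLattice E) (B : set (E -> E)) (xi : nat -> E -> E) (T : E -> E) :
  KB_space BL ->
  boolean_subalgebra BL B ->
  forward_filtration B xi ->
  positive_op BL T ->
  volterra B T ->
  let B' := band_generated BL xi (gen_set xi) in
  exists Phi : nat -> Wt E -> Wt E,
    (forall y, B' y -> B' (Phi 1%N y)) /\
    forall l : nat, (1 <= l)%N ->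
      (forall y, B' y -> Phi l y = bang xi T l y) /\
      (forall y, B' y -> in_W xi (Phi l y)) /\
      (forall (a : R) y z, B' y -> B' z ->
          Phi l (W_add y (W_scale a z)) = W_add (Phi l y) (W_scale a (Phi l z))) /\
      (exists C : R, forall y M, B' y -> W_bounded_by y M ->
          W_bounded_by (Phi l y) (C * M)) /\
      (forall y, B' y -> Phi l y = iter l (Phi 1%N) y).
Proof.
move=> hKB hBA hF hT hV B'.
have [C0 hC0] := pos_bounded hKB hT.
pose C := `|C0|.
have hC : forall v, `|T v| <= C * `|v|.
  move=> v; apply: le_trans (hC0 v) _; apply: ler_wpM2r => //; exact: ler_norm.
have hCp : 0 <= C by exact: normr_ge0.
have hBW : forall y, B' y -> in_W xi y := B'_inW hBA hF.
exists (fun l y => bang xi T l y); split.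
  move=> y hy S hS hsub; apply: hsub; exists (That xi T (y 0%N)); split => //.
  exact: (That_Mb hBA hF hV hC hCp) ((hBW y hy).1 0%N).
move=> l hl; split; first by [].
split.
  move=> y hy; apply: gen_inW; apply: (iter_Mb hBA hF hV hC hCp).
  exact: (hBW y hy).1 0%N.
split.
  move=> a y z hy hz; rewrite /bang /W_add /W_scale /=.
  rewrite (iter_lin hBA hF hT).
  by apply: funext => k; apply: funext => i.
split.
  exists (C ^+ l) => y M hy hM k i; rewrite /bang /shift_k.
  apply: (iter_bound hBA hF hC hCp) => j; exact: hM.
move=> y _; case: l hl => // n _.
elim: n y => [|n ih] y //.
rewrite iterS -ih; apply: funext => k.
rewrite /bang /=.
have -> : shift_k 0 (iter n.+1 (That xi T) (y 0%N)) = iter n.+1 (That xi T) (y 0%N).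
  by apply: funext => i; rewrite /shift_k addn0.
by [].
Qed.
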